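(* In the isotropic setting below, for all $F\in\mathrm{GL}^+(3)$ and $C_p\in\mathrm{PSym}(3)$ one has $$\widetilde\Sigma\,C_p\in\mathrm{Sym}(3),\quad C_p^{-1}\widetilde\Sigma\in\mathrm{Sym}(3),\quad (\mathrm{dev}_3\widetilde\Sigma)\,C_p\in\mathrm{Sym}(3),\quad C_p^{-1}\mathrm{dev}_3\widetilde\Sigma\in\mathrm{Sym}(3).$$
   Context: $W$ objective and isotropic, written $W(F_e)=\Psi(I_1(C_e),I_2(C_e),I_3(C_e))$ with $\Psi$ of class $C^1$; $I_1=\mathrm{tr}$, $I_2(X)=\mathrm{tr}(\mathrm{Cof}X)$, $I_3=\det$; $\widetilde W(X)=\Psi(I_1(X),I_2(X),I_3(X))$. $C=F^TF$. $\langle X,Y\rangle=\mathrm{tr}(XY^T)$, $D$ the gradient w.r.t. it. $\widetilde\Sigma:=2\,C\,D\widetilde W(CC_p^{-1})\,C_p^{-1}$. $\mathrm{dev}_3X=X-\frac13\mathrm{tr}(X)\mathbb{1}$. $\mathrm{Sym}(3)$, $\mathrm{PSym}(3)$: symmetric, resp. symmetric positive definite $3\times3$ matrices. *)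

(* Defs.v *)
(* classical real numbers. 3x3 real matrices are represented as
   functions nat -> nat -> R, of which only the entries with indices 0,1,2 matter. *)
From Stdlib Require Import Reals Lra.
Open Scope R_scope.

Definition Mat := nat -> nat -> R.

Definition sum3 (f : nat -> R) : R := f 0%nat + f 1%nat + f 2%nat.

Definition mmul (A B : Mat) : Mat := fun i j => sum3 (fun k => A i k * B k j).
Definition madd (A B : Mat) : Mat := fun i j => A i j + B i j.
Definition mscale (a : R) (A : Mat) : Mat := fun i j => a * A i j.
Definition trans (A : Mat) : Mat := fun i j => A j i.
Definition Id3 : Mat := fun i j => if Nat.eqb i j then 1 else 0.
Definition tr (A : Mat) : R := sum3 (fun i => A i i).

Definition nx (i : nat) : nat := match i with 0%nat => 1%nat | 1%nat => 2%nat | _ => 0%nat end.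
Definition nn (i : nat) : nat := nx (nx i).

(* cofactor matrix Cof A (so that A (Cof A)^T = det A * 1) *)
Definition Cof (A : Mat) : Mat := fun i j =>
  A (nx i) (nx j) * A (nn i) (nn j) - A (nx i) (nn j) * A (nn i) (nx j).
Definition det3 (A : Mat) : R := sum3 (fun j => A 0%nat j * Cof A 0%nat j).
Definition inv3 (A : Mat) : Mat := mscale (/ det3 A) (trans (Cof A)).

Definition I1 (X : Mat) : R := tr X.
Definition I2 (X : Mat) : R := tr (Cof X).
Definition I3 (X : Mat) : R := det3 X.

Definition dev3 (X : Mat) : Mat := madd X (mscale (- (tr X / 3)) Id3).

Definition inner (X Y : Mat) : R := tr (mmul X (trans Y)).
Definition fnorm (X : Mat) : R := sqrt (inner X X).

Definition Sym3 (A : Mat) : Prop :=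
  forall i j, (i < 3)%nat -> (j < 3)%nat -> A i j = A j i.

Definition PSym3 (A : Mat) : Prop :=
  Sym3 A /\
  forall x : nat -> R, (exists i, (i < 3)%nat /\ x i <> 0) ->
    0 < sum3 (fun i => sum3 (fun j => x i * A i j * x j)).

Definition is_gradient (f : Mat -> R) (X G : Mat) : Prop :=
  forall eps, 0 < eps -> exists delta, 0 < delta /\
    forall H : Mat, fnorm H < delta ->
      Rabs (f (madd X H) - f X - inner G H) <= eps * fnorm H.

(* open positive orthant (0,oo)^3, the set of possible invariants of PSym(3) *)
Definition orthant (a b c : R) : Prop := 0 < a /\ 0 < b /\ 0 < c.

Definition cont3_at (g : R -> R -> R -> R) (a b c : R) : Prop :=
  forall eps, 0 < eps -> exists delta, 0 < delta /\
    forall x y z, Rabs (x - a) < delta -> Rabs (y - b) < delta -> Rabs (z - c) < delta ->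
      Rabs (g x y z - g a b c) < eps.

Definition C1_orthant (Psi : R -> R -> R -> R) : Prop :=
  exists d1 d2 d3 : R -> R -> R -> R,
    forall a b c, orthant a b c ->
      derivable_pt_lim (fun t => Psi t b c) a (d1 a b c) /\
      derivable_pt_lim (fun t => Psi a t c) b (d2 a b c) /\
      derivable_pt_lim (fun t => Psi a b t) c (d3 a b c) /\
      cont3_at d1 a b c /\ cont3_at d2 a b c /\ cont3_at d3 a b c.

(* Main.v *)
Require Import Defs.
From Stdlib Require Import Reals Lra Lia Setoid Morphisms Classical.
Open Scope R_scope.

Definition eq3 (A B : Mat) : Prop := forall i j, (i < 3)%nat -> (j < 3)%nat -> A i j = B i j.

Ltac idx := let i := fresh "i" in let j := fresh "j" in let Hi := fresh in let Hj := fresh in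
  intros i j Hi Hj;
  destruct i as [|[|[|i]]]; try lia; destruct j as [|[|[|j]]]; try lia.

Ltac ex := unfold eq3, Sym3, dev3, I1, I2, I3, inv3, det3, tr, Cof, mmul, madd, mscale, trans, Id3, sum3, nn, nx; simpl.

Lemma eq3_refl : forall A, eq3 A A. Proof. unfold eq3; auto. Qed.
Lemma eq3_sym : forall A B, eq3 A B -> eq3 B A. Proof. unfold eq3; intros; symmetry; auto. Qed.
Lemma eq3_trans : forall A B C, eq3 A B -> eq3 B C -> eq3 A C.
Proof. unfold eq3; intros; rewrite H; auto. Qed.
#[export] Instance eq3_Equiv : Equivalence eq3.
Proof. split; [exact eq3_refl|exact eq3_sym|exact eq3_trans]. Qed.

Ltac usehyp := repeat match goal with H : eq3 ?A ?B |- context [?A ?x ?y] =>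
   rewrite (H x y) by lia end.

#[export] Instance mmul_Proper : Proper (eq3 ==> eq3 ==> eq3) mmul.
Proof. intros A A' HA B B' HB; idx; ex; usehyp; ring. Qed.
#[export] Instance madd_Proper : Proper (eq3 ==> eq3 ==> eq3) madd.
Proof. intros A A' HA B B' HB; idx; ex; usehyp; ring. Qed.
#[export] Instance mscale_Proper : Proper (eq ==> eq3 ==> eq3) mscale.
Proof. intros a a' <- B B' HB; idx; ex; usehyp; ring. Qed.
#[export] Instance trans_Proper : Proper (eq3 ==> eq3) trans.
Proof. intros B B' HB; idx; ex; usehyp; ring. Qed.
#[export] Instance Cof_Proper : Proper (eq3 ==> eq3) Cof.
Proof. intros B B' HB; idx; ex; usehyp; ring. Qed.
#[export] Instance tr_Proper : Proper (eq3 ==> eq) tr.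
Proof. intros B B' HB; ex; usehyp; ring. Qed.
#[export] Instance det3_Proper : Proper (eq3 ==> eq) det3.
Proof. intros B B' HB; ex; usehyp; ring. Qed.
#[export] Instance inv3_Proper : Proper (eq3 ==> eq3) inv3.
Proof. intros B B' HB. unfold inv3. rewrite HB. reflexivity. Qed.
#[export] Instance dev3_Proper : Proper (eq3 ==> eq3) dev3.
Proof. intros B B' HB. unfold dev3. rewrite HB. reflexivity. Qed.
#[export] Instance Sym3_Proper : Proper (eq3 ==> iff) Sym3.
Proof. intros B B' HB; unfold Sym3; split; intros H i j Hi Hj.
  rewrite <- !HB by lia; auto. rewrite !HB by lia; auto. Qed.

Lemma mmul_assoc A B C : eq3 (mmul (mmul A B) C) (mmul A (mmul B C)).
Proof. idx; ex; ring. Qed.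
Lemma det_mul A B : det3 (mmul A B) = det3 A * det3 B.
Proof. ex; ring. Qed.
Lemma Cof_mul A B : eq3 (Cof (mmul A B)) (mmul (Cof A) (Cof B)).
Proof. idx; ex; ring. Qed.
Lemma Cof_trans A : eq3 (Cof (trans A)) (trans (Cof A)).
Proof. idx; ex; ring. Qed.
Lemma det_trans A : det3 (trans A) = det3 A.
Proof. ex; ring. Qed.
Lemma det_Cof A : det3 (Cof A) = det3 A ^ 2.
Proof. ex; ring. Qed.
Lemma inv_r A : det3 A <> 0 -> eq3 (mmul A (inv3 A)) Id3.
Proof. intro H; idx; ex; ex; field; ex; auto. Qed.
Lemma inv_l A : det3 A <> 0 -> eq3 (mmul (inv3 A) A) Id3.
Proof. intro H; idx; ex; field; ex; auto. Qed.
Lemma Cof_inv A : det3 A <> 0 -> eq3 (Cof (inv3 A)) (mscale (/ det3 A) (trans A)).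
Proof. intro H; idx; ex; field; ex; auto. Qed.
Definition Gf (a b c : R) (X : Mat) : Mat :=
  madd (mscale a Id3) (madd (mscale b (madd (mscale (tr X) Id3) (mscale (-1) (trans X)))) (mscale c (Cof X))).
Ltac symsub S HS := rewrite ?(HS 1%nat 0%nat), ?(HS 2%nat 0%nat), ?(HS 2%nat 1%nat) by lia.
Lemma CG_sym a b c C P : Sym3 C -> Sym3 P -> Sym3 (mmul C (Gf a b c (mmul C P))).
Proof. intros HC HP. unfold Gf. idx; ex; symsub C HC; symsub P HP; ring. Qed.
Lemma mmul_scale_l k A B : eq3 (mmul (mscale k A) B) (mscale k (mmul A B)). Proof. idx; ex; ring. Qed.
Lemma mmul_scale_r k A B : eq3 (mmul A (mscale k B)) (mscale k (mmul A B)). Proof. idx; ex; ring. Qed.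
Lemma mmul_add_l A B C : eq3 (mmul (madd A B) C) (madd (mmul A C) (mmul B C)). Proof. idx; ex; ring. Qed.
Lemma mmul_add_r A B C : eq3 (mmul C (madd A B)) (madd (mmul C A) (mmul C B)). Proof. idx; ex; ring. Qed.
Lemma mmul_Id_r A : eq3 (mmul A Id3) A. Proof. idx; ex; ring. Qed.
Lemma mmul_Id_l A : eq3 (mmul Id3 A) A. Proof. idx; ex; ring. Qed.
Lemma Sym_add A B : Sym3 A -> Sym3 B -> Sym3 (madd A B).
Proof. unfold Sym3, madd; intros; rewrite H, H0 by lia; auto. Qed.
Lemma Sym_scale k A : Sym3 A -> Sym3 (mscale k A).
Proof. unfold Sym3, mscale; intros; rewrite H by lia; auto. Qed.
Lemma Sym_PSP P S : Sym3 P -> Sym3 S -> Sym3 (mmul P (mmul S P)).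
Proof. intros HP HS. idx; ex; symsub P HP; symsub S HS; ring. Qed.

Lemma final_alg S P Cp : Sym3 S -> Sym3 P -> Sym3 Cp -> eq3 (mmul P Cp) Id3 ->
  let Sigma := mscale 2 (mmul S P) in
    Sym3 (mmul Sigma Cp) /\ Sym3 (mmul P Sigma) /\
    Sym3 (mmul (dev3 Sigma) Cp) /\ Sym3 (mmul P (dev3 Sigma)).
Proof.
  intros HS HP HC HPC Sigma.
  assert (H1 : Sym3 (mmul Sigma Cp)).
  { unfold Sigma. rewrite mmul_scale_l, mmul_assoc, HPC, mmul_Id_r. apply Sym_scale; auto. }
  assert (H2 : Sym3 (mmul P Sigma)).
  { unfold Sigma. rewrite mmul_scale_r. apply Sym_scale, Sym_PSP; auto. }
  split; [auto|split; [auto|split]]; unfold dev3.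
  - rewrite mmul_add_l, mmul_scale_l, mmul_Id_l. apply Sym_add; auto. apply Sym_scale; auto.
  - rewrite mmul_add_r, mmul_scale_r, mmul_Id_r. apply Sym_add; auto. apply Sym_scale; auto.
Qed.

Definition qf (Q : Mat) (x : nat -> R) : R := sum3 (fun i => sum3 (fun j => x i * Q i j * x j)).
Definition PD (Q : Mat) : Prop := forall x : nat -> R, (exists i, (i < 3)%nat /\ x i <> 0) -> 0 < qf Q x.

Lemma qf_zero Q x : x 0%nat = 0 -> x 1%nat = 0 -> x 2%nat = 0 -> qf Q x = 0.
Proof. intros. unfold qf, sum3. rewrite H, H0, H1. ring. Qed.

Lemma qf_nonneg Q x : PD Q -> 0 <= qf Q x.
Proof.
  intros HQ. destruct (classic (exists i, (i < 3)%nat /\ x i <> 0)) as [Hx|Hx].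
  - left; auto.
  - right. symmetry. apply qf_zero; apply NNPP; intro Hn; apply Hx; eexists; (split; [|exact Hn]); lia.
Qed.

Lemma PSym_det Cp : PSym3 Cp -> 0 < det3 Cp.
Proof.
  intros [HS HP].
  assert (H0 : 0 < Cp 0%nat 0%nat).
  { assert (Hp := HP (fun i => if Nat.eqb i 0 then 1 else 0) ltac:(exists 0%nat; split; [lia|simpl; lra])).
    unfold sum3 in Hp; simpl in Hp. nra. }
  assert (HM : 0 < Cp 0%nat 0%nat * Cp 1%nat 1%nat - Cp 0%nat 1%nat * Cp 0%nat 1%nat).
  { assert (Hp := HP (fun i => match i with 0%nat => Cp 0%nat 1%nat | 1%nat => - Cp 0%nat 0%nat | _ => 0 end)
       ltac:(exists 1%nat; split; [lia|simpl; lra])).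
    unfold sum3 in Hp; simpl in Hp. rewrite ?(HS 1%nat 0%nat), ?(HS 2%nat 0%nat), ?(HS 2%nat 1%nat) in Hp by lia.
    assert (0 < Cp 0%nat 0%nat * (Cp 0%nat 0%nat * Cp 1%nat 1%nat - Cp 0%nat 1%nat * Cp 0%nat 1%nat)).
    { eapply Rlt_le_trans; [exact Hp|right; ring]. }
    nra. }
  assert (Hp := HP (fun j => Cof Cp 2%nat j) ltac:(exists 2%nat; split; [lia|]; ex; symsub Cp HS; lra)).
  assert (0 < det3 Cp * (Cp 0%nat 0%nat * Cp 1%nat 1%nat - Cp 0%nat 1%nat * Cp 0%nat 1%nat)).
  { eapply Rlt_le_trans; [exact Hp|right]. ex. symsub Cp HS. ring. }
  nra.
Qed.

Lemma PD_inv Cp : PSym3 Cp -> PD (inv3 Cp).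
Proof.
  intros HCp. pose proof (PSym_det Cp HCp) as Hd. destruct HCp as [HS HP].
  intros x Hx.
  set (y := fun i => sum3 (fun j => inv3 Cp i j * x j)).
  assert (E : qf (inv3 Cp) x = qf Cp y).
  { unfold qf, y. ex. symsub Cp HS. field. intro Hz. apply (Rlt_irrefl 0). rewrite <- Hz at 2.
    replace 0 with (det3 Cp * 0) at 1 by ring. clear -Hd HS Hz. revert Hd. ex. symsub Cp HS. nra. }
  rewrite E. apply HP.
  apply NNPP; intro Hn.
  assert (Hy : forall i, (i < 3)%nat -> y i = 0).
  { intros i Hi. apply NNPP; intro Hyi; apply Hn; exists i; auto. }
  assert (Hxx : forall i, (i < 3)%nat -> x i = sum3 (fun j => Cp i j * y j)).
  { intros i Hi; destruct i as [|[|[|i]]]; try lia; unfold y; ex; symsub Cp HS; field;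
    intro Hz; revert Hd; ex; symsub Cp HS; lra. }
  destruct Hx as [i [Hi Hxi]]. apply Hxi. rewrite Hxx by auto. unfold sum3. rewrite !Hy by lia. ring.
Qed.

Lemma tr_gram A Q : Sym3 Q -> tr (mmul (mmul (trans A) A) Q) = sum3 (fun i => qf Q (fun j => A i j)).
Proof. intro HQ. unfold qf. ex. symsub Q HQ. ring. Qed.

Lemma pos_rows Q A : PD Q -> det3 A <> 0 -> 0 < sum3 (fun i => qf Q (fun j => A i j)).
Proof.
  intros HQ HA. unfold sum3; cbv beta.
  pose proof (qf_nonneg Q (fun j => A 0%nat j) HQ).
  pose proof (qf_nonneg Q (fun j => A 1%nat j) HQ).
  pose proof (qf_nonneg Q (fun j => A 2%nat j) HQ).
  destruct (classic (exists j, (j < 3)%nat /\ A 0%nat j <> 0)) as [E0|E0].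
  { pose proof (HQ (fun j => A 0%nat j) E0). lra. }
  destruct (classic (exists j, (j < 3)%nat /\ A 1%nat j <> 0)) as [E1|E1].
  { pose proof (HQ (fun j => A 1%nat j) E1). lra. }
  destruct (classic (exists j, (j < 3)%nat /\ A 2%nat j <> 0)) as [E2|E2].
  { pose proof (HQ (fun j => A 2%nat j) E2). lra. }
  exfalso. apply HA.
  assert (Z : forall i j, (i < 3)%nat -> (j < 3)%nat -> A i j = 0).
  { intros i j Hi Hj. apply NNPP; intro Hn.
    destruct i as [|[|[|i]]]; try lia; [apply E0|apply E1|apply E2]; exists j; auto. }
  ex. rewrite !Z by lia. ring.
Qed.

Lemma tr_scale k A : tr (mscale k A) = k * tr A. Proof. ex; ring. Qed.
Lemma trans_sym A : Sym3 A -> eq3 (trans A) A.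
Proof. unfold Sym3, eq3, trans; intros; symmetry; auto. Qed.
Lemma Sym_inv A : Sym3 A -> Sym3 (inv3 A).
Proof. intro H; idx; ex; symsub A H; ring. Qed.
Lemma det_Id : det3 Id3 = 1. Proof. ex; ring. Qed.

Lemma invariants_pos F Cp : 0 < det3 F -> PSym3 Cp ->
  let X0 := mmul (mmul (trans F) F) (inv3 Cp) in
  orthant (I1 X0) (I2 X0) (I3 X0).
Proof.
  intros hF hCp X0. pose proof (PSym_det Cp hCp) as Hd.
  pose proof (PD_inv Cp hCp) as HPD. pose proof hCp as [HS _].
  split; [|split].
  - unfold X0, I1. rewrite tr_gram by (apply Sym_inv; auto). apply pos_rows; auto. lra.
  - unfold X0, I2. rewrite !Cof_mul, Cof_trans, Cof_inv by lra.
    rewrite (trans_sym Cp HS), mmul_scale_r, tr_scale, tr_gram by auto.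
    apply Rmult_lt_0_compat. apply Rinv_0_lt_compat; auto.
    apply pos_rows. destruct hCp; auto. rewrite det_Cof. nra.
  - unfold X0, I3. rewrite !det_mul, det_trans.
    assert (E : det3 (inv3 Cp) * det3 Cp = 1).
    { rewrite <- det_mul, <- det_Id. apply det3_Proper. apply inv_l. lra. }
    assert (0 < det3 (inv3 Cp)) by nra. apply Rmult_lt_0_compat; nra.
Qed.

Definition Ecell (i j : nat) (t : R) : Mat := fun a b => if Nat.eqb a i then if Nat.eqb b j then t else 0 else 0.

Lemma inner_E G i j t : (i < 3)%nat -> (j < 3)%nat -> inner G (Ecell i j t) = G i j * t.
Proof. intros Hi Hj. destruct i as [|[|[|i]]]; try lia; destruct j as [|[|[|j]]]; try lia;
  unfold inner, Ecell; ex; ring. Qed.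

Lemma fnorm_E i j t : (i < 3)%nat -> (j < 3)%nat -> fnorm (Ecell i j t) = Rabs t.
Proof. intros Hi Hj. unfold fnorm. rewrite inner_E by auto. unfold Ecell. rewrite !Nat.eqb_refl.
  rewrite <- sqrt_Rsqr_abs. reflexivity. Qed.

Lemma grad_unique f X G1 G2 : is_gradient f X G1 -> is_gradient f X G2 -> eq3 G1 G2.
Proof.
  intros H1 H2 i j Hi Hj. apply NNPP; intro Hne.
  set (d := G1 i j - G2 i j).
  assert (Hd : 0 < Rabs d) by (apply Rabs_pos_lt; unfold d; lra).
  destruct (H1 (Rabs d / 4) ltac:(lra)) as [d1 [Hd1 P1]].
  destruct (H2 (Rabs d / 4) ltac:(lra)) as [d2 [Hd2 P2]].
  set (t := Rmin d1 d2 / 2).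
  assert (Hm : 0 < Rmin d1 d2) by (apply Rmin_glb_lt; auto).
  assert (Ht : 0 < t) by (unfold t; lra).
  assert (Hn : fnorm (Ecell i j t) < Rmin d1 d2).
  { rewrite fnorm_E by auto. rewrite Rabs_right by lra. unfold t.
    assert (0 < Rmin d1 d2) by (apply Rmin_glb_lt; auto). lra. }
  specialize (P1 (Ecell i j t) ltac:(pose proof (Rmin_l d1 d2); lra)).
  specialize (P2 (Ecell i j t) ltac:(pose proof (Rmin_r d1 d2); lra)).
  rewrite inner_E, fnorm_E in P1, P2 by auto. rewrite (Rabs_right t) in P1, P2 by lra.
  assert (Rabs (d * t) <= Rabs d / 2 * t).
  { replace (d * t) with ((f (madd X (Ecell i j t)) - f X - G2 i j * t) -
                          (f (madd X (Ecell i j t)) - f X - G1 i j * t)) by (unfold d; ring).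
    eapply Rle_trans; [apply Rabs_triang|]. rewrite Rabs_Ropp. lra. }
  rewrite Rabs_mult, (Rabs_right t) in H by lra. nra.
Qed.

Definition mabs (A : Mat) : R :=
  sum3 (fun i => sum3 (fun j => Rabs (A i j))).

Lemma mabs_nonneg A : 0 <= mabs A.
Proof. unfold mabs, sum3. pose proof (Rabs_pos). repeat (apply Rplus_le_le_0_compat || apply Rabs_pos). Qed.

Lemma entry_le H i j : (i < 3)%nat -> (j < 3)%nat -> Rabs (H i j) <= fnorm H.
Proof.
  intros Hi Hj. rewrite <- sqrt_Rsqr_abs. unfold fnorm. apply sqrt_le_1_alt.
  unfold Rsqr. destruct i as [|[|[|i]]]; try lia; destruct j as [|[|[|j]]]; try lia;
  unfold inner; ex; nra.
Qed.

Lemma inner_bound A B m : (forall i j, (i < 3)%nat -> (j < 3)%nat -> Rabs (B i j) <= m) ->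
  Rabs (inner A B) <= mabs A * m.
Proof.
  intros HB.
  assert (E : inner A B = sum3 (fun i => sum3 (fun j => A i j * B i j))) by (unfold inner; ex; ring).
  rewrite E. unfold mabs, sum3; cbv beta.
  assert (K : forall i j, (i < 3)%nat -> (j < 3)%nat -> Rabs (A i j * B i j) <= Rabs (A i j) * m).
  { intros. rewrite Rabs_mult. apply Rmult_le_compat_l; [apply Rabs_pos|auto]. }
  pose proof (K 0%nat 0%nat) ; pose proof (K 0%nat 1%nat) ; pose proof (K 0%nat 2%nat);
  pose proof (K 1%nat 0%nat) ; pose proof (K 1%nat 1%nat) ; pose proof (K 1%nat 2%nat);
  pose proof (K 2%nat 0%nat) ; pose proof (K 2%nat 1%nat) ; pose proof (K 2%nat 2%nat).
  repeat match goal with H : (?a < 3)%nat -> _ |- _ => specialize (H ltac:(lia)) end.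
  assert (T : forall a b c, Rabs (a + b + c) <= Rabs a + Rabs b + Rabs c).
  { intros. eapply Rle_trans; [apply Rabs_triang|]. pose proof (Rabs_triang a b). lra. }
  eapply Rle_trans; [apply T|].
  pose proof (T (A 0%nat 0%nat * B 0%nat 0%nat) (A 0%nat 1%nat * B 0%nat 1%nat) (A 0%nat 2%nat * B 0%nat 2%nat)).
  pose proof (T (A 1%nat 0%nat * B 1%nat 0%nat) (A 1%nat 1%nat * B 1%nat 1%nat) (A 1%nat 2%nat * B 1%nat 2%nat)).
  pose proof (T (A 2%nat 0%nat * B 2%nat 0%nat) (A 2%nat 1%nat * B 2%nat 1%nat) (A 2%nat 2%nat * B 2%nat 2%nat)).
  lra.
Qed.

Lemma prod_le a b n : Rabs a <= n -> Rabs b <= n -> Rabs (a * b) <= n * n.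
Proof. intros. rewrite Rabs_mult. apply Rmult_le_compat; auto; apply Rabs_pos. Qed.

Lemma Cof_bound H i j : (i < 3)%nat -> (j < 3)%nat -> Rabs (Cof H i j) <= 2 * (fnorm H * fnorm H).
Proof.
  intros Hi Hj. unfold Cof. unfold Rminus.
  eapply Rle_trans; [apply Rabs_triang|]. rewrite Rabs_Ropp.
  assert (Hx : forall k, (nx k < 3)%nat) by (intros [|[|[|k]]]; simpl; lia).
  assert (Hy : forall k, (nn k < 3)%nat) by (intros k; unfold nn; apply Hx).
  pose proof (prod_le (H (nx i) (nx j)) (H (nn i) (nn j)) (fnorm H) (entry_le _ _ _ (Hx _) (Hx _)) (entry_le _ _ _ (Hy _) (Hy _))).
  pose proof (prod_le (H (nx i) (nn j)) (H (nn i) (nx j)) (fnorm H) (entry_le _ _ _ (Hx _) (Hy _)) (entry_le _ _ _ (Hy _) (Hx _))). lra.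
Qed.

Lemma T3 a b c : Rabs (a + b + c) <= Rabs a + Rabs b + Rabs c.
Proof. eapply Rle_trans; [apply Rabs_triang|]. pose proof (Rabs_triang a b). lra. Qed.

Lemma I2_bound H : Rabs (I2 H) <= 6 * (fnorm H * fnorm H).
Proof.
  unfold I2, tr, sum3. eapply Rle_trans; [apply T3|].
  pose proof (Cof_bound H 0 0 ltac:(lia) ltac:(lia)).
  pose proof (Cof_bound H 1 1 ltac:(lia) ltac:(lia)).
  pose proof (Cof_bound H 2 2 ltac:(lia) ltac:(lia)). lra.
Qed.

Lemma det_bound H : Rabs (det3 H) <= 6 * (fnorm H * (fnorm H * fnorm H)).
Proof.
  unfold det3, sum3. eapply Rle_trans; [apply T3|].
  assert (forall j, (j < 3)%nat -> Rabs (H 0%nat j * Cof H 0%nat j) <= fnorm H * (2 * (fnorm H * fnorm H))).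
  { intros. rewrite Rabs_mult. apply Rmult_le_compat; try apply Rabs_pos.
    apply entry_le; lia. apply Cof_bound; lia. }
  pose proof (H0 0%nat ltac:(lia)). pose proof (H0 1%nat ltac:(lia)). pose proof (H0 2%nat ltac:(lia)).
  lra.
Qed.

Lemma mvt_sym g g' x h : (forall y, Rabs (y - x) <= Rabs h -> derivable_pt_lim g y (g' y)) ->
  exists y, Rabs (y - x) <= Rabs h /\ g (x + h) - g x = g' y * h.
Proof.
  intros Hd. destruct (Rtotal_order h 0) as [Hn|[Hz|Hp]].
  - destruct (MVT_cor2 g g' (x + h) x ltac:(lra)) as [y [E Hy]].
    { intros y Hy. apply Hd. rewrite (Rabs_left h) by lra. unfold Rabs; destruct Rcase_abs; lra. }
    exists y. split. rewrite (Rabs_left h) by lra. unfold Rabs; destruct Rcase_abs; lra.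
    replace (x - (x + h)) with (- h) in E by ring. lra.
  - subst. exists x. split. unfold Rminus; rewrite Rplus_opp_r, Rabs_R0; lra. rewrite Rplus_0_r. ring.
  - destruct (MVT_cor2 g g' x (x + h) ltac:(lra)) as [y [E Hy]].
    { intros y Hy. apply Hd. rewrite (Rabs_right h) by lra. unfold Rabs; destruct Rcase_abs; lra. }
    exists y. split. rewrite (Rabs_right h) by lra. unfold Rabs; destruct Rcase_abs; lra.
    replace (x + h - x) with h in E by ring. lra.
Qed.

Lemma Psi_diff (Psi d1 d2 d3 : R -> R -> R -> R) a b c :
  (forall a b c, orthant a b c ->
      derivable_pt_lim (fun t => Psi t b c) a (d1 a b c) /\
      derivable_pt_lim (fun t => Psi a t c) b (d2 a b c) /\
      derivable_pt_lim (fun t => Psi a b t) c (d3 a b c) /\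
      cont3_at d1 a b c /\ cont3_at d2 a b c /\ cont3_at d3 a b c) ->
  orthant a b c ->
  forall eps, 0 < eps -> exists delta, 0 < delta /\ forall v1 v2 v3,
    Rabs v1 < delta -> Rabs v2 < delta -> Rabs v3 < delta ->
    Rabs (Psi (a+v1) (b+v2) (c+v3) - Psi a b c - (d1 a b c * v1 + d2 a b c * v2 + d3 a b c * v3))
      <= eps * (Rabs v1 + Rabs v2 + Rabs v3).
Proof.
  intros Hd Ho eps He. pose proof Ho as [Ha [Hb Hc]].
  destruct (Hd a b c Ho) as [_ [_ [_ [C1 [C2 C3]]]]].
  destruct (C1 eps He) as [e1 [He1 K1]].
  destruct (C2 eps He) as [e2 [He2 K2]].
  destruct (C3 eps He) as [e3 [He3 K3]].
  set (dl := Rmin (Rmin e1 e2) (Rmin e3 (Rmin (a/2) (Rmin (b/2) (c/2))))).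
  assert (L1 : dl <= e1) by (unfold dl; pose proof (Rmin_l (Rmin e1 e2) (Rmin e3 (Rmin (a/2) (Rmin (b/2) (c/2))))); pose proof (Rmin_l e1 e2); lra).
  assert (L2 : dl <= e2) by (unfold dl; pose proof (Rmin_l (Rmin e1 e2) (Rmin e3 (Rmin (a/2) (Rmin (b/2) (c/2))))); pose proof (Rmin_r e1 e2); lra).
  assert (L3 : dl <= e3 /\ dl <= a/2 /\ dl <= b/2 /\ dl <= c/2).
  { unfold dl. pose proof (Rmin_r (Rmin e1 e2) (Rmin e3 (Rmin (a/2) (Rmin (b/2) (c/2))))).
    pose proof (Rmin_l e3 (Rmin (a/2) (Rmin (b/2) (c/2)))). pose proof (Rmin_r e3 (Rmin (a/2) (Rmin (b/2) (c/2)))).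
    pose proof (Rmin_l (a/2) (Rmin (b/2) (c/2))). pose proof (Rmin_r (a/2) (Rmin (b/2) (c/2))).
    pose proof (Rmin_l (b/2) (c/2)). pose proof (Rmin_r (b/2) (c/2)). lra. }
  assert (Hdl : 0 < dl).
  { unfold dl. repeat apply Rmin_glb_lt; lra. }
  exists dl. split; [exact Hdl|]. intros v1 v2 v3 H1 H2 H3.
  assert (A1 : forall v, Rabs v < dl -> 0 < a + v) by (intros v Hv; unfold Rabs in Hv; destruct Rcase_abs in Hv; lra).
  assert (A2 : forall v, Rabs v < dl -> 0 < b + v) by (intros v Hv; unfold Rabs in Hv; destruct Rcase_abs in Hv; lra).
  assert (A3 : forall v, Rabs v < dl -> 0 < c + v) by (intros v Hv; unfold Rabs in Hv; destruct Rcase_abs in Hv; lra).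
  assert (Sh : forall x y, Rabs (x + y - x) = Rabs y) by (intros; f_equal; ring).
  destruct (mvt_sym (fun t => Psi (a+v1) (b+v2) t) (fun t => d3 (a+v1) (b+v2) t) c v3) as [y3 [Hy3 E3]].
  { intros y Hy. assert (Hy' : Rabs (y - c) < dl) by lra.
    replace y with (c + (y - c)) by ring.
    apply (Hd (a+v1) (b+v2) (c + (y-c))). split; [|split]; auto. }
  destruct (mvt_sym (fun t => Psi (a+v1) t c) (fun t => d2 (a+v1) t c) b v2) as [y2 [Hy2 E2]].
  { intros y Hy. assert (Hy' : Rabs (y - b) < dl) by lra.
    replace y with (b + (y - b)) by ring.
    apply (Hd (a+v1) (b + (y-b)) c). split; [|split]; auto. }
  destruct (mvt_sym (fun t => Psi t b c) (fun t => d1 t b c) a v1) as [y1 [Hy1 E1]].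
  { intros y Hy. assert (Hy' : Rabs (y - a) < dl) by lra.
    replace y with (a + (y - a)) by ring.
    apply (Hd (a + (y-a)) b c). split; [|split]; auto. }
  simpl in E1, E2, E3.
  assert (B3 : Rabs (d3 (a+v1) (b+v2) y3 - d3 a b c) < eps) by (apply K3; rewrite ?Sh; lra).
  assert (B2 : Rabs (d2 (a+v1) y2 c - d2 a b c) < eps).
  { apply K2; rewrite ?Sh; try lra. unfold Rminus; rewrite Rplus_opp_r, Rabs_R0; lra. }
  assert (B1 : Rabs (d1 y1 b c - d1 a b c) < eps).
  { apply K1; rewrite ?Sh; try lra; unfold Rminus; rewrite Rplus_opp_r, Rabs_R0; lra. }
  replace (Psi (a+v1) (b+v2) (c+v3) - Psi a b c - (d1 a b c * v1 + d2 a b c * v2 + d3 a b c * v3))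
    with ((d1 y1 b c - d1 a b c) * v1 + (d2 (a+v1) y2 c - d2 a b c) * v2 + (d3 (a+v1) (b+v2) y3 - d3 a b c) * v3)
    by lra.
  eapply Rle_trans; [apply T3|]. rewrite !Rabs_mult.
  assert (P1 := Rabs_pos v1). assert (P2 := Rabs_pos v2). assert (P3 := Rabs_pos v3).
  assert (Rabs (d1 y1 b c - d1 a b c) * Rabs v1 <= eps * Rabs v1) by (apply Rmult_le_compat_r; lra).
  assert (Rabs (d2 (a+v1) y2 c - d2 a b c) * Rabs v2 <= eps * Rabs v2) by (apply Rmult_le_compat_r; lra).
  assert (Rabs (d3 (a+v1) (b+v2) y3 - d3 a b c) * Rabs v3 <= eps * Rabs v3) by (apply Rmult_le_compat_r; lra).
  lra.
Qed.

Definition A2 (X : Mat) : Mat := madd (mscale (tr X) Id3) (mscale (-1) (trans X)).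

Lemma exp1 X H : I1 (madd X H) = I1 X + inner Id3 H.
Proof. unfold inner; ex; ring. Qed.
Lemma exp2 X H : I2 (madd X H) = I2 X + (inner (A2 X) H + I2 H).
Proof. unfold inner, A2; ex; ring. Qed.
Lemma exp3 X H : I3 (madd X H) = I3 X + (inner (Cof X) H + (inner X (Cof H) + det3 H)).
Proof. unfold inner; ex; ring. Qed.
Lemma inner_Gf a b c X H : inner (Gf a b c X) H = a * inner Id3 H + b * inner (A2 X) H + c * inner (Cof X) H.
Proof. unfold inner, Gf, A2; ex; ring. Qed.

Lemma grad_exists (Psi d1 d2 d3 : R -> R -> R -> R) X0 :
  (forall a b c, orthant a b c ->
      derivable_pt_lim (fun t => Psi t b c) a (d1 a b c) /\
      derivable_pt_lim (fun t => Psi a t c) b (d2 a b c) /\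
      derivable_pt_lim (fun t => Psi a b t) c (d3 a b c) /\
      cont3_at d1 a b c /\ cont3_at d2 a b c /\ cont3_at d3 a b c) ->
  orthant (I1 X0) (I2 X0) (I3 X0) ->
  is_gradient (fun X => Psi (I1 X) (I2 X) (I3 X)) X0
    (Gf (d1 (I1 X0) (I2 X0) (I3 X0)) (d2 (I1 X0) (I2 X0) (I3 X0)) (d3 (I1 X0) (I2 X0) (I3 X0)) X0).
Proof.
  intros Hd Ho eps He.
  set (p := I1 X0) in *. set (q := I2 X0) in *. set (r := I3 X0) in *.
  set (K := 12 + mabs Id3 + mabs (A2 X0) + mabs (Cof X0) + 2 * mabs X0).
  assert (HK : 12 <= K).
  { unfold K. pose proof (mabs_nonneg Id3). pose proof (mabs_nonneg (A2 X0)).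
    pose proof (mabs_nonneg (Cof X0)). pose proof (mabs_nonneg X0). lra. }
  set (D := Rabs (d1 p q r) + Rabs (d2 p q r) + Rabs (d3 p q r)).
  assert (HD : 0 <= D) by (unfold D; pose proof (Rabs_pos (d1 p q r)); pose proof (Rabs_pos (d2 p q r)); pose proof (Rabs_pos (d3 p q r)); lra).
  destruct (Psi_diff Psi d1 d2 d3 p q r Hd Ho (eps / (6 * K)) ltac:(apply Rdiv_lt_0_compat; lra)) as [dl [Hdl P]].
  set (e2 := eps / (2 * (D + 1) * K)).
  assert (He2 : 0 < e2) by (unfold e2; apply Rdiv_lt_0_compat; [lra|]; apply Rmult_lt_0_compat; lra).
  exists (Rmin 1 (Rmin (dl / (2 * K)) e2)). split.
  { repeat apply Rmin_glb_lt; try lra. apply Rdiv_lt_0_compat; lra. }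
  intros H Hn. set (n := fnorm H) in *.
  assert (Hn0 : 0 <= n) by (unfold n, fnorm; apply sqrt_pos).
  assert (Hn1 : n <= 1) by (pose proof (Rmin_l 1 (Rmin (dl / (2 * K)) e2)); lra).
  assert (Hn2 : n <= dl / (2 * K)) by (pose proof (Rmin_r 1 (Rmin (dl / (2 * K)) e2)); pose proof (Rmin_l (dl / (2 * K)) e2); lra).
  assert (Hn3 : n <= e2) by (pose proof (Rmin_r 1 (Rmin (dl / (2 * K)) e2)); pose proof (Rmin_r (dl / (2 * K)) e2); lra).
  rewrite exp1, exp2, exp3, inner_Gf. fold p q r.
  set (v1 := inner Id3 H). set (rr2 := I2 H). set (rr3 := inner X0 (Cof H) + det3 H).
  set (v2 := inner (A2 X0) H + rr2). set (v3 := inner (Cof X0) H + rr3).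
  assert (EH : forall i j, (i < 3)%nat -> (j < 3)%nat -> Rabs (H i j) <= n) by (intros; apply entry_le; auto).
  assert (B1 : Rabs v1 <= mabs Id3 * n) by (apply inner_bound; auto).
  assert (BA : Rabs (inner (A2 X0) H) <= mabs (A2 X0) * n) by (apply inner_bound; auto).
  assert (BC : Rabs (inner (Cof X0) H) <= mabs (Cof X0) * n) by (apply inner_bound; auto).
  assert (BR2 : Rabs rr2 <= 6 * (n * n)) by (apply I2_bound).
  assert (BR3 : Rabs rr3 <= 2 * mabs X0 * (n * n) + 6 * (n * (n * n))).
  { unfold rr3. eapply Rle_trans; [apply Rabs_triang|].
    assert (Rabs (inner X0 (Cof H)) <= mabs X0 * (2 * (n * n))) by (apply inner_bound; intros; apply Cof_bound; auto).
    pose proof (det_bound H). fold n in H1. lra. }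
  assert (nn1 : n * n <= n) by nra.
  assert (nn2 : n * (n * n) <= n) by nra.
  pose proof (mabs_nonneg Id3). pose proof (mabs_nonneg (A2 X0)).
  pose proof (mabs_nonneg (Cof X0)). pose proof (mabs_nonneg X0).
  assert (BR : Rabs rr2 + Rabs rr3 <= K * (n * n)).
  { unfold K. assert (mabs X0 * (n * n) >= 0) by nra. assert (0 <= n * n) by nra.
    assert (n * (n*n) <= n * n) by nra.
    assert (0 <= mabs Id3 * (n*n)) by nra. assert (0 <= mabs (A2 X0) * (n*n)) by nra. assert (0 <= mabs (Cof X0) * (n*n)) by nra.
    nra. }
  assert (V2 : Rabs v2 <= K * n).
  { unfold v2. eapply Rle_trans; [apply Rabs_triang|]. unfold K.
    assert (0 <= mabs Id3 * n) by nra. assert (0 <= mabs (Cof X0) * n) by nra. assert (0 <= mabs X0 * n) by nra. nra. }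
  assert (V3 : Rabs v3 <= K * n).
  { unfold v3. eapply Rle_trans; [apply Rabs_triang|]. unfold K.
    assert (0 <= mabs Id3 * n) by nra. assert (0 <= mabs (A2 X0) * n) by nra. assert (0 <= mabs X0 * (n*n)) by nra.
    assert (mabs X0 * (n*n) <= mabs X0 * n) by nra. nra. }
  assert (V1 : Rabs v1 <= K * n).
  { unfold K. assert (0 <= mabs (Cof X0) * n) by nra. assert (0 <= mabs (A2 X0) * n) by nra. assert (0 <= mabs X0 * n) by nra. nra. }
  assert (Kn : K * n <= dl / 2).
  { apply (Rmult_le_compat_l K) in Hn2; [|lra]. replace (K * (dl / (2 * K))) with (dl / 2) in Hn2 by (field; lra). lra. }
  specialize (P v1 v2 v3 ltac:(lra) ltac:(lra) ltac:(lra)).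
  replace (Psi (p + v1) (q + v2) (r + v3) - Psi p q r -
     (d1 p q r * v1 + d2 p q r * inner (A2 X0) H + d3 p q r * inner (Cof X0) H))
   with ((Psi (p + v1) (q + v2) (r + v3) - Psi p q r - (d1 p q r * v1 + d2 p q r * v2 + d3 p q r * v3))
         + (d2 p q r * rr2 + d3 p q r * rr3)) by (unfold v2, v3; ring).
  eapply Rle_trans; [apply Rabs_triang|].
  assert (S1 : eps / (6 * K) * (Rabs v1 + Rabs v2 + Rabs v3) <= eps * n / 2).
  { assert (Rabs v1 + Rabs v2 + Rabs v3 <= 3 * (K * n)) by lra.
    apply Rle_trans with (eps / (6 * K) * (3 * (K * n))).
    apply Rmult_le_compat_l; [|lra]. left; apply Rdiv_lt_0_compat; lra.
    right; field; lra. }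
  assert (S2 : Rabs (d2 p q r * rr2 + d3 p q r * rr3) <= D * (K * (n * n))).
  { eapply Rle_trans; [apply Rabs_triang|]. rewrite !Rabs_mult.
    pose proof (Rabs_pos (d1 p q r)). pose proof (Rabs_pos (d2 p q r)). pose proof (Rabs_pos (d3 p q r)).
    pose proof (Rabs_pos rr2). pose proof (Rabs_pos rr3).
    apply Rle_trans with ((Rabs (d2 p q r) + Rabs (d3 p q r)) * (Rabs rr2 + Rabs rr3)). nra.
    apply Rmult_le_compat; try lra. unfold D; lra. }
  assert (S3 : D * (K * (n * n)) <= eps * n / 2).
  { assert (D * K * n <= D * K * e2) by (apply Rmult_le_compat_l; [nra|lra]).
    assert (D * K * e2 <= eps / 2).
    { unfold e2. replace (D * K * (eps / (2 * (D + 1) * K))) with (eps / 2 * (D / (D + 1))) by (field; lra).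
      assert (D / (D+1) <= 1). { apply Rmult_le_reg_r with (D+1); [lra|]. field_simplify; lra. }
      nra. }
    nra. }
  lra.
Qed.

Lemma Sym_gram F : Sym3 (mmul (trans F) F).
Proof. idx; ex; ring. Qed.

Theorem mainTheorem7 (Psi : R -> R -> R -> R) (hPsi : C1_orthant Psi)
  (F Cp : Mat) (hF : 0 < det3 F) (hCp : PSym3 Cp) :
  let Wt := fun X : Mat => Psi (I1 X) (I2 X) (I3 X) in
  let C := mmul (trans F) F in
  let X0 := mmul C (inv3 Cp) in
  (exists G, is_gradient Wt X0 G) /\
  forall G, is_gradient Wt X0 G ->
    let Sigma := mscale 2 (mmul (mmul C G) (inv3 Cp)) in
    Sym3 (mmul Sigma Cp) /\ Sym3 (mmul (inv3 Cp) Sigma) /\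
    Sym3 (mmul (dev3 Sigma) Cp) /\ Sym3 (mmul (inv3 Cp) (dev3 Sigma)).
Proof.
  intros Wt C X0.
  destruct hPsi as [d1 [d2 [d3 Hd]]].
  pose proof (invariants_pos F Cp hF hCp) as Ho. cbv zeta in Ho.
  pose proof (PSym_det Cp hCp) as Hdet.
  assert (HG : is_gradient Wt X0 (Gf (d1 (I1 X0) (I2 X0) (I3 X0)) (d2 (I1 X0) (I2 X0) (I3 X0)) (d3 (I1 X0) (I2 X0) (I3 X0)) X0)).
  { apply grad_exists; auto. }
  split. { eexists; exact HG. }
  intros G HG'. cbv zeta.
  assert (E : eq3 G (Gf (d1 (I1 X0) (I2 X0) (I3 X0)) (d2 (I1 X0) (I2 X0) (I3 X0)) (d3 (I1 X0) (I2 X0) (I3 X0)) X0))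
    by (eapply grad_unique; eauto).
  rewrite E.
  pose proof hCp as [HS _].
  pose proof (final_alg (mmul C (Gf (d1 (I1 X0) (I2 X0) (I3 X0)) (d2 (I1 X0) (I2 X0) (I3 X0)) (d3 (I1 X0) (I2 X0) (I3 X0)) X0)) (inv3 Cp) Cp) as Hf.
  cbv zeta in Hf. apply Hf; auto.
  - unfold X0. apply CG_sym. apply Sym_gram. apply Sym_inv; auto.
  - apply Sym_inv; auto.
  - apply inv_l; lra.
Qed.
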